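(* Let $0<p<q<\infty$. Then the norm of the embedding operator $I\colon\ell^{p,q}\to\ell^{p,\infty}$ is $$\|I\|=\Big(\frac{q}{p}\Big)^{1/q}.$$
   Context: For a scalar sequence $a=(a_n)$, its decreasing rearrangement is $a^*_n=\inf\{\omega>0:\#\{k:|a_k|>\omega\}\le n-1\}$. For $p,q\in(0,\infty]$, the Lorentz sequence space $\ell^{p,q}$ consists of all sequences $a$ with $\|a\|_{p,q}<\infty$, where $\|a\|_{p,q}=\big(\sum_{n=1}^\infty (a_n^* )^q n^{q/p-1}\big)^{1/q}$ if $q<\infty$, and $\|a\|_{p,\infty}=\sup_{n}n^{1/p}a_n^*$. The operator norm is $\|I\|=\sup_{\|a\|_{p,q}\le1}\|a\|_{p,\infty}$. *)

(* Defs.v *)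
From mathcomp Require Import all_boot all_order all_algebra.
From mathcomp Require Import all_classical all_reals all_analysis.
Import Order.TTheory GRing.Theory Num.Theory.
Local Open Scope classical_set_scope.
Local Open Scope ring_scope.

(* #{k : |a_k| > w} <= m  (the set may a priori be infinite, in which case
   this fails) *)
Definition count_gt_le {R : realType} (a : nat -> R) (w : R) (m : nat) : Prop :=
  exists s : seq nat, (size s <= m)%N /\ (forall k, w < `|a k| -> k \in s).

(* decreasing rearrangement a^*_n, n >= 1, as an extended real
   (inf of the empty set is +oo) *)
Definition drearr {R : realType} (a : nat -> R) (n : nat) : \bar R :=
  ereal_inf [set w%:E | w in [set w : R | 0 < w /\ count_gt_le a w n.-1]].

Definition lorentz_norm {R : realType} (p q : R) (a : nat -> R) : \bar R :=
  poweR (\sum_(1 <= n <oo)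
           (poweR (drearr a n) q * (powR (n%:R) (q / p - 1))%:E))%E q^-1.

Definition lorentz_norm_inf {R : realType} (p : R) (a : nat -> R) : \bar R :=
  ereal_sup [set ((powR (n%:R) p^-1)%:E * drearr a n)%E | n in [set n : nat | (0 < n)%N]].

Definition embedding_norm {R : realType} (p q : R) : \bar R :=
  ereal_sup [set lorentz_norm_inf p a | a in [set a : nat -> R | (lorentz_norm p q a <= 1)%E]].

(* Main.v *)
Require Import Defs.
From mathcomp Require Import all_boot all_order all_algebra.
From mathcomp Require Import all_classical all_reals all_analysis.
From mathcomp Require Import ring lra.
Import Order.TTheory GRing.Theory Num.Theory.
Local Open Scope ring_scope.

Section S.
Variable R : realType.

Lemma tangent (r x y : R) : 1 < r -> 0 <= x -> 0 <= y ->
  r * x `^ (r-1) * y <= y `^ r + (r-1) * x `^ r.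
Proof.
move=> r1 x0 y0.
have r0 : 0 < r by lra.
have r10 : 0 < r - 1 by lra.
have := @conjugate_powR R y (x `^ (r-1)) r (r/(r-1)) y0 (powR_ge0 _ _) r0
  (divr_gt0 r0 r10).
rewrite -powRrM mulrCA mulfV ?gt_eqF // mulr1 invf_div.
have -> : r^-1 + (r-1)/r = 1.
  by field; rewrite gt_eqF.
move/(_ erefl) => H.
have := ler_wpM2l (ltW r0) H.
set X := x `^ (r-1); set Y := y `^ r; set Z := x `^ r.
have -> : r * (y * X) = r * X * y by ring.
have -> : r * (Y / r + Z * ((r - 1) / r)) = Y + (r-1) * Z.
  by field; rewrite !gt_eqF.
done.
Qed.

Definition S (r : R) (n : nat) := \sum_(1 <= k < n.+1) (k%:R : R) `^ (r-1).

Lemma S_lower r n : 1 < r -> n%:R `^ r <= r * S r n.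
Proof.
move=> r1; elim: n => [|n IH].
  by rewrite /S big_geq // mulr0 powR0 // gt_eqF // (lt_trans ltr01).
rewrite /S big_nat_recr //= -/(S r n) mulrDr.
have := @tangent r n.+1%:R n%:R r1 (ler0n R n.+1) (ler0n R n).
have -> : n.+1%:R `^ r = n.+1%:R * n.+1%:R `^ (r-1).
  by rewrite mulr_powRB1 // (lt_trans ltr01).
set X := n.+1%:R `^ (r-1) => H.
have X0 : 0 <= X by apply: powR_ge0.
rewrite -natr1; rewrite -natr1 in H. nra.
Qed.

Lemma S_upper r n : 1 < r -> r * S r n <= n.+1%:R `^ r.
Proof.
move=> r1; elim: n => [|n IH].
  by rewrite /S big_geq // mulr0 powR_ge0.
rewrite /S big_nat_recr //= -/(S r n) mulrDr.
have := @tangent r n.+1%:R n.+2%:R r1 (ler0n R n.+1) (ler0n R n.+2).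
have E : n.+1%:R `^ r = n.+1%:R * n.+1%:R `^ (r-1).
  by rewrite mulr_powRB1 // (lt_trans ltr01).
rewrite -/(S r n) E in IH. rewrite E => H.
set X := n.+1%:R `^ (r-1) in H IH *.
have X0 : 0 <= X by apply: powR_ge0.
rewrite -[n.+2%:R]natr1 -natr1 in H. rewrite -natr1 in IH. rewrite -[n.+2%:R]natr1 -natr1. nra.
Qed.


Lemma exists_n r (L : R) : 1 < r -> 0 <= L -> L < r ->
  exists n, (0 < n)%N /\ L * S r n < n%:R `^ r.
Proof.
move=> r1 L0 Lr.
have e0 : 0 < r - L by lra.
have r0 : 0 < r by lra.
set n := (Num.truncn (r * r / (r - L))).+1.
have hN : r * r / (r - L) < n%:R by apply: truncnS_gt.
have hN' : r * r < (r - L) * n%:R.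
  by move: hN; rewrite ltr_pdivrMr // [n%:R * _]mulrC.
exists n; split => //.
have := @S_upper r n r1.
have := @tangent r n.+1%:R n%:R r1 (ler0n R n.+1) (ler0n R n).
have E : n.+1%:R `^ r = n.+1%:R * n.+1%:R `^ (r-1).
  by rewrite mulr_powRB1 // (lt_trans ltr01).
rewrite E => H1 H2.
set X := n.+1%:R `^ (r-1) in H1 H2.
have X0 : 0 < X by apply: powR_gt0.
have S0 : 0 <= S r n by rewrite /S sumr_ge0 // => k _; apply: powR_ge0.
set N := n%:R in hN' H1 H2 *.
set Y := N `^ r in H1 *.
rewrite -natr1 -/N in H1 H2.
have H3 : r * (L * S r n) <= L * ((N + 1) * X) by nra.
have H4 : L * ((N + 1) * X) < r * (N + 1 - r) * X.
  have : L * (N + 1) < r * (N + 1 - r) by nra.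
  by move=> h; rewrite mulrA -subr_gt0 -mulrBl pmulr_rgt0 // subr_gt0.
have H5 : (N + 1 - r) * X <= Y by nra.
have : r * (L * S r n) < r * Y by nra.
by rewrite ltr_pM2l.
Qed.


Local Open Scope ereal_scope.

Lemma drearr_ge0 (a : nat -> R) n : 0 <= drearr a n.
Proof. by apply: le_ereal_inf_tmp => _ [w [w0 _] <-]; rewrite lee_fin ltW. Qed.

Lemma drearr_anti (a : nat -> R) m n : (m <= n)%N -> drearr a n <= drearr a m.
Proof.
move=> mn; apply: ereal_inf_le_tmp => _ [w [w0 [s [hs hk]]] <-].
exists w => //; split => //; exists s; split => //.
apply: (leq_trans hs); by rewrite -!subn1 leq_sub2r.
Qed.

Definition tseq (c : R) n : nat -> R := fun k => if (k < n)%N then c else 0%R.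

Lemma drearr_tseq_le c n m : (0 < c)%R -> drearr (tseq c n) m <= c%:E.
Proof.
move=> c0; apply: ereal_inf_lbound; exists c => //; split => //.
exists [::]; split => // k; rewrite /tseq; case: ifP => _.
  by rewrite gtr0_norm // ltxx.
by rewrite normr0 ltNge (ltW c0).
Qed.

Lemma drearr_tseq_big c n m : (0 < c)%R -> (n < m)%N -> drearr (tseq c n) m = 0.
Proof.
move=> c0 nm; apply/eqP; rewrite eq_le drearr_ge0 andbT.
have H : forall e, (0 < e)%R -> drearr (tseq c n) m <= e%:E.
  move=> e e0; apply: ereal_inf_lbound; exists e => //; split => //.
  exists (iota 0 n); split.
    by rewrite size_iota; case: m nm.
  move=> k; rewrite /tseq mem_iota add0n; case: ifP => // _.
  by rewrite normr0 ltNge (ltW e0).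
have := H 1%R ltr01; have := drearr_ge0 (tseq c n) m.
case: (drearr (tseq c n) m) H => [x| |] H //= x0 _.
rewrite lee_fin; rewrite lee_fin in x0.
rewrite leNgt; apply/negP => xp.
have := H (x / 2)%R; rewrite lee_fin; have h2 : (0 < x / 2)%R by lra.
move=> /(_ h2).
apply/negP; rewrite -ltNge; lra.
Qed.

Lemma drearr_tseq_ge c n : (0 < c)%R -> (0 < n)%N -> c%:E <= drearr (tseq c n) n.
Proof.
move=> c0 n0; apply: le_ereal_inf_tmp => _ [w [w0 [s [hs hk]]] <-].
rewrite lee_fin leNgt; apply/negP => wc.
have sub : {subset iota 0 n <= s}.
  move=> k; rewrite mem_iota add0n => /andP[_ kn]; apply: hk.
  by rewrite /tseq kn gtr0_norm.
have := leq_trans (uniq_leq_size (iota_uniq 0 n) sub) hs.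
by rewrite size_iota; case: (n) n0 => //= n' _; rewrite ltnn.
Qed.


Lemma in0y (x : \bar R) : 0 <= x -> x \in `[0%E, +oo%E].
Proof. by move=> x0; rewrite in_itv /= x0 leey. Qed.

Lemma lorentz_tseq p q n c : (0 < p)%R -> (p < q)%R -> (0 < c)%R ->
  lorentz_norm p q (tseq c n) <= ((c `^ q * S (q/p) n) `^ q^-1)%:E.
Proof.
move=> p0 pq c0; have q0 : (0 < q)%R by lra.
rewrite /lorentz_norm -poweR_EFin.
apply: gt0_ler_poweR; first by rewrite invr_ge0 ltW.
- apply: in0y; apply: nneseries_ge0 => m _ _.
  by apply: mule_ge0; [exact: poweR_ge0 | rewrite lee_fin powR_ge0].
- by apply: in0y; rewrite lee_fin mulr_ge0 // ?powR_ge0 // /S sumr_ge0 // => k _; apply: powR_ge0.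
rewrite (nneseries_split 1 n); last first.
  by move=> m _; apply: mule_ge0; [exact: poweR_ge0 | rewrite lee_fin powR_ge0].
rewrite [X in _ + X]eseries0 ?adde0; last first.
  move=> m nm _; rewrite drearr_tseq_big // ?poweR0r ?mul0e //.
    by rewrite gt_eqF.
rewrite /S mulr_sumr -sumEFin add1n.
apply: lee_sum => m _.
rewrite EFinM; apply: lee_wpmul2r; first by rewrite lee_fin powR_ge0.
rewrite -poweR_EFin; apply: gt0_ler_poweR; first by rewrite ltW.
- by apply: in0y; apply: drearr_ge0.
- by apply: in0y; rewrite lee_fin ltW.
exact: drearr_tseq_le.
Qed.


Lemma upper p q (a : nat -> R) n : (0 < p)%R -> (p < q)%R -> (0 < n)%N ->
  lorentz_norm p q a <= 1 ->
  (n%:R `^ p^-1)%:E * drearr a n <= ((q/p) `^ q^-1)%:E.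
Proof.
move=> p0 pq n0 Ha; have q0 : (0 < q)%R by lra.
have r1 : (1 < q / p)%R by rewrite ltr_pdivlMr // mul1r.
set F := fun m => drearr a m `^ q * (m%:R `^ (q / p - 1))%:E.
have F0 : forall m, 0 <= F m.
  by move=> m; apply: mule_ge0; [exact: poweR_ge0 | rewrite lee_fin powR_ge0].
set Sum := \sum_(1 <= m <oo) F m.
have Sum0 : 0 <= Sum by apply: nneseries_ge0 => m _ _.
have Sum1 : Sum <= 1.
  have -> : Sum = (lorentz_norm p q a) `^ q.
    by rewrite /lorentz_norm -poweRrM mulVf ?gt_eqF // poweRe1.
  rewrite -(poweR1r q); apply: gt0_ler_poweR => //; first by rewrite ltW.
    by apply: in0y; apply: poweR_ge0.
  by apply: in0y.
have Part : \sum_(1 <= m < n.+1) F m <= 1.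
  by apply: le_trans Sum1; apply: nneseries_lim_ge => m _ _.
have Fn : F n <= 1.
  apply: le_trans Part; rewrite big_nat_recr //=.
  by apply: lee_paddl => //; apply: sume_ge0 => m _.
have := drearr_ge0 a n.
have Dm : forall m, (1 <= m <= n)%N -> drearr a n <= drearr a m.
  by move=> m /andP[_ mn]; apply: drearr_anti.
move: Fn Dm; rewrite /F.
case: (drearr a n) => [d| |] //; last first.
  rewrite poweRyr ?gt_eqF // gt0_mulye ?lte_fin ?powR_gt0 ?ltr0n //.
move=> Fn Dm d0; rewrite lee_fin in d0.
have HS : ((d `^ q * S (q/p) n)%:E <= 1).
  apply: le_trans Part.
  rewrite /S mulr_sumr -sumEFin big_nat [X in _ <= X]big_nat; apply: lee_sum => m /andP[m1 mn].
  rewrite /F EFinM; apply: lee_wpmul2r; first by rewrite lee_fin powR_ge0.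
  rewrite -poweR_EFin; apply: gt0_ler_poweR; first by rewrite ltW.
  - by apply: in0y; rewrite lee_fin.
  - by apply: in0y; apply: drearr_ge0.
  by apply: Dm; rewrite m1 -ltnS.
rewrite lee_fin in HS.
have hL := @S_lower (q/p)%R n r1.
rewrite -EFinM lee_fin.
have E : ((n%:R `^ p^-1 * d) `^ q = n%:R `^ (q/p) * d `^ q)%R.
  by rewrite powRM ?powR_ge0 // -powRrM [(p^-1 * q)%R]mulrC.
have H2 : ((n%:R `^ p^-1 * d) `^ q <= q / p)%R.
  rewrite E; have Sd : (0 <= d `^ q)%R by apply: powR_ge0.
  have : (n%:R `^ (q / p) * d `^ q <= (q / p) * S (q / p) n * d `^ q)%R.
    by apply: ler_wpM2r.
  move/le_trans; apply.
  rewrite -mulrA [X in (_ * X)%R]mulrC.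
  by apply: ler_piMr => //; apply: ltW; apply: lt_trans r1.
have := @ge0_ler_powR R q^-1 _ _ _ _ _ H2.
rewrite -powRrM mulfV ?gt_eqF // powRr1; last first.
  by rewrite mulr_ge0 // powR_ge0.
apply.
- by rewrite invr_ge0 ltW.
- by rewrite nnegrE powR_ge0.
- by rewrite nnegrE divr_ge0 // ltW.
Qed.


Lemma lower p q (L : R) : (0 < p)%R -> (p < q)%R -> (L < (q/p) `^ q^-1)%R ->
  exists a, lorentz_norm p q a <= 1 /\ L%:E < lorentz_norm_inf p a.
Proof.
move=> p0 pq HL; have q0 : (0 < q)%R by lra.
have r1 : (1 < q / p)%R by rewrite ltr_pdivlMr // mul1r.
set r := (q / p)%R in r1 HL *.
set L' := Num.max L 0%R.
have L'0 : (0 <= L')%R by rewrite le_max lexx orbT.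
have LL' : (L <= L')%R by rewrite le_max lexx.
have HL' : (L' < r `^ q^-1)%R.
  by rewrite gt_max HL powR_gt0 // (lt_trans ltr01).
have HLq : (L' `^ q < r)%R.
  have := @gt0_ltr_powR R q q0 _ _ _ _ HL'.
  rewrite -powRrM mulVf ?gt_eqF // powRr1; last by rewrite ltW // (lt_trans ltr01).
  apply; by rewrite nnegrE ?powR_ge0.
have [n [n0 Hn]] := @exists_n r (L' `^ q) r1 (powR_ge0 _ _) HLq.
have hL := @S_lower r n r1.
have Sp : (0 < S r n)%R.
  have : (0 < n%:R `^ r)%R by rewrite powR_gt0 // ltr0n.
  move/lt_le_trans => /(_ _ hL); rewrite pmulr_rgt0 //.
  by apply: lt_trans r1.
set c := (S r n `^ (- q^-1))%R.
have c0 : (0 < c)%R by apply: powR_gt0.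
have cq : (c `^ q * S r n = 1)%R.
  rewrite -powRrM mulNr mulVf ?gt_eqF // powR_inv1 ?mulVf ?gt_eqF //.
  exact: ltW.
exists (tseq c n); split.
  by apply: le_trans (lorentz_tseq p q n c p0 pq c0) _; rewrite -/r cq powR1.
apply: (@lt_le_trans _ _ (((n%:R `^ p^-1) * c)%:E)); last first.
  apply: (@le_trans _ _ ((n%:R `^ p^-1)%:E * drearr (tseq c n) n)).
    by rewrite EFinM; apply: lee_wpmul2l; [rewrite lee_fin powR_ge0 | exact: drearr_tseq_ge].
  by apply: ereal_sup_ubound; exists n.
rewrite lte_fin; apply: le_lt_trans LL' _.
rewrite ltNge; apply/negP => H.
have := @ge0_ler_powR R q (ltW q0) _ _ _ _ H.
rewrite powRM ?powR_ge0 ?(ltW c0) // -powRrM [(p^-1 * q)%R]mulrC -/r.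
move/(_ (mulr_ge0 (powR_ge0 _ _) (ltW c0)) L'0).
have : (n%:R `^ r * c `^ q > L' `^ q)%R.
  have -> : (c `^ q = (S r n)^-1)%R.
    by apply: (mulIf (lt0r_neq0 Sp)); rewrite cq mulVf // gt_eqF.
  by rewrite ltr_pdivlMr.
by move=> h1 h2; move: (lt_le_trans h1 h2); rewrite ltxx.
Qed.

End S.

Theorem mainTheorem10 (R : realType) (p q : R) :
  0 < p -> p < q ->
  embedding_norm p q = (powR (q / p) q^-1)%:E.
Proof.
move=> p0 pq.
apply/le_anti/andP; split.
  apply: ge_ereal_sup => _ [a Ha <-].
  apply: ge_ereal_sup => _ [n n0 <-].
  exact: upper.
rewrite leNgt; apply/negP.
case E : (embedding_norm p q) => [e| |] // H.
- rewrite lte_fin in H; have [a [Ha Hl]] := @lower R p q _ p0 pq H.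
  have : (lorentz_norm_inf p a <= embedding_norm p q)%E.
    by apply: ereal_sup_ubound; exists a.
  by rewrite E => /(lt_le_trans Hl); rewrite ltxx.
- have H0 : (0 < (q / p) `^ q^-1) by apply: powR_gt0; apply: divr_gt0 => //; lra.
  have [a [Ha Hl]] := @lower R p q _ p0 pq H0.
  have : (lorentz_norm_inf p a <= embedding_norm p q)%E.
    by apply: ereal_sup_ubound; exists a.
  by rewrite E leeNy_eq => /eqP Hy; rewrite Hy in Hl.
Qed.
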